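(* Let $p,n$ be positive integers with $c=\gcd(p,n)$ prime, and $y\in\mathbb{Z}_n$. Let $\varphi_i,\varphi_j\in\operatorname{End}((\mathbb{Z}_n,y,y))$ (where $\varphi_m$ denotes the pointed endomorphism with $\varphi_m(y+1)=m$) and let $\alpha\in\hom(P(\widetilde{\mathcal{T}(p,2)}),(\mathbb{Z}_n,y,y))$ be a nontrivial (non-constant) coloring. Then $\varphi_i\circ\alpha=\varphi_j\circ\alpha$ if and only if $i\equiv j\pmod c$.
   Context: $\mathbb{Z}_n$ is the dihedral quandle ($x\triangleright y=2y-x$ mod $n$) and $(\mathbb{Z}_n,y,y)$ the $2$-pointed quandle with both basepoints $y$; pointed endomorphisms are quandle endomorphisms fixing $y$, and each is determined by its value at $y+1$. $P(\widetilde{\mathcal{T}(p,2)})=(Q,x_1,x_{p+1})$ with $Q=\langle x_1,\dots,x_{p+1}\mid x_p=x_2\triangleright x_{p+1},\ x_i=x_{i+2}\triangleright x_{i+1}\ (1\le i\le p-1)\rangle$, the fundamental pointed quandle of the $1$-linkoid of $(p,2)$-torus type; $\hom$ denotes basepoint-preserving homomorphisms. Since $c\mid n$, the congruence $i\equiv j \pmod c$ is well defined for $i,j\in\mathbb{Z}_n$. *)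

(* Defs.v *)
From mathcomp Require Import all_boot.
Set Implicit Arguments. Unset Strict Implicit. Unset Printing Implicit Defensive.

Lemma ord_pos n (x : 'I_n) : 0 < n.
Proof. exact: leq_ltn_trans (leq0n x) (ltn_ord x). Qed.

Definition zmod n (x : 'I_n) (k : nat) : 'I_n := Ordinal (ltn_pmod k (ord_pos x)).

Definition dop n (x z : 'I_n) : 'I_n := zmod x (2 * z + (n - x)).

Definition zsucc n (y : 'I_n) : 'I_n := zmod y y.+1.

Definition pointed_endo n (y : 'I_n) (f : 'I_n -> 'I_n) : Prop :=
  (forall x z, f (dop x z) = dop (f x) (f z)) /\ f y = y.

(* Quandle terms in generators x_1, ..., x_{p+1}; generator x_{k+1} is
   [qgen k] with k : 'I_(p+1). [qop a b] is a |> b, [qinv a b] is a |>^{-1} b. *)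
Inductive qterm (m : nat) : Type :=
| qgen of 'I_m
| qop of qterm m & qterm m
| qinv of qterm m & qterm m.

(* The congruence on terms defining the presented quandle
   Q = < x_1..x_{p+1} | x_p = x_2 |> x_{p+1}, x_i = x_{i+2} |> x_{i+1} (1<=i<=p-1) >. *)
Inductive qeq (p : nat) : qterm p.+1 -> qterm p.+1 -> Prop :=
| qeq_refl t : qeq t t
| qeq_sym t s : qeq t s -> qeq s t
| qeq_trans t s u : qeq t s -> qeq s u -> qeq t u
| qeq_op t t' s s' : qeq t t' -> qeq s s' -> qeq (qop t s) (qop t' s')
| qeq_inv t t' s s' : qeq t t' -> qeq s s' -> qeq (qinv t s) (qinv t' s')
| qeq_idem t : qeq (qop t t) t
| qeq_opinv t s : qeq (qop (qinv t s) s) t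
| qeq_invop t s : qeq (qinv (qop t s) s) t
| qeq_distr t s u : qeq (qop (qop t s) u) (qop (qop t u) (qop s u))
| qeq_rel0 : qeq (qgen (inord p.-1)) (qop (qgen (inord 1)) (qgen (inord p)))
| qeq_rel k : k < p.-1 ->
    qeq (qgen (inord k)) (qop (qgen (inord k.+2)) (qgen (inord k.+1))).

(* basepoint-preserving homomorphisms (Q, x_1, x_{p+1}) -> (Z_n, y, y),
   represented as maps on terms that are well defined on Q *)
Definition pointed_hom (p : nat) n (y : 'I_n) (alpha : qterm p.+1 -> 'I_n) : Prop :=
  [/\ forall t s, qeq t s -> alpha t = alpha s,
      forall t s, alpha (qop t s) = dop (alpha t) (alpha s),
      (* in the dihedral quandle |>^{-1} = |> *)
      forall t s, alpha (qinv t s) = dop (alpha t) (alpha s),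
      alpha (qgen ord0) = y
    & alpha (qgen ord_max) = y].

(* Main.v *)
Require Import Defs.
From mathcomp Require Import all_boot all_algebra ring lra zify.
Import GRing.Theory Num.Theory.
Set Implicit Arguments. Unset Strict Implicit.
Local Open Scope ring_scope.

Definition cg (n : nat) (a b : int) := (n%:Z %| a - b)%Z.

Lemma cgR n a b : a = b -> cg n a b.
Proof. by move=> ->; rewrite /cg subrr dvdz0. Qed.
Lemma cg_sym n a b : cg n a b -> cg n b a.
Proof. by rewrite /cg -opprB rpredN. Qed.
Lemma cg_trans n a b c : cg n a b -> cg n b c -> cg n a c.
Proof.
rewrite /cg => h1 h2; have := rpredD h1 h2.
by rewrite addrA subrK.
Qed.
Lemma cgD n a b c d : cg n a b -> cg n c d -> cg n (a + c) (b + d).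
Proof.
rewrite /cg => h1 h2; have := rpredD h1 h2.
by have -> : a - b + (c - d) = a + c - (b + d) by ring.
Qed.
Lemma cgM n a b k : cg n a b -> cg n (a * k) (b * k).
Proof.
rewrite /cg => h; have := dvdz_mulr k h.
by rewrite mulrBl.
Qed.
Lemma cgN n a b : cg n a b -> cg n (- a) (- b).
Proof. by rewrite /cg -opprD rpredN. Qed.
Lemma cg0 n a : cg n (a * n%:Z) 0.
Proof. by rewrite /cg subr0 dvdz_mull ?dvdzz. Qed.

Lemma cg_nat c (a b : nat) : (a = b %[mod c])%N <-> cg c a b.
Proof.
rewrite /cg -eqz_mod_dvd !modz_nat; split; first by move=> ->.
by move/eqP; case.
Qed.

Lemma cg_mod n (m : nat) : cg n (m %% n)%N m.
Proof. by apply/cg_nat; rewrite modn_mod. Qed.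

Lemma ord_cg n (u v : 'I_n) : cg n u v -> u = v.
Proof.
move/cg_nat; rewrite !modn_small // => h; exact: val_inj.
Qed.

Lemma dopE n (x z : 'I_n) : cg n ((dop x z : nat)%:Z + x) (2 * z%:Z).
Proof.
have h := cg_mod n (2 * z + (n - x))%N.
have := cgD h (cgR n (erefl (x : int))).
move/cg_trans; apply.
rewrite -PoszD -addnA subnK; last exact: ltnW.
rewrite PoszD.
have := cgD (cgR n (erefl (2 * z%:Z))) (cg0 n 1).
rewrite mul1r addr0 => h2; apply: cg_trans h2.
apply: cgR. by rewrite PoszM.
Qed.

Lemma dopE' n (x z : 'I_n) : cg n (dop x z : nat) (2 * z%:Z - (x : nat)%:Z).
Proof.
have := cgD (dopE x z) (cgR n (erefl (- (x : nat)%:Z))).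
by rewrite addrK.
Qed.

Lemma cg_lin2 n a a' b b' : cg n a a' -> cg n b b' -> cg n (2 * b - a) (2 * b' - a').
Proof.
move=> h1 h2; apply: cgD (cgN h1).
by rewrite !(mulrC 2); apply: cgM.
Qed.

Lemma zmodE n (y : 'I_n) m : cg n (zmod y m : nat) m.
Proof. exact: cg_mod. Qed.

Lemma endo_nat n (y : 'I_n) f : pointed_endo y f -> forall k : nat,
  cg n (f (zmod y (y + k)%N) : nat) (y%:Z + k%:Z * ((f (zsucc y) : int) - y%:Z)).
Proof.
case=> hm hy.
suff H : forall k, cg n (f (zmod y (y + k)%N) : nat) (y%:Z + k%:Z * ((f (zsucc y) : int) - y%:Z))
  /\ cg n (f (zmod y (y + k.+1)%N) : nat) (y%:Z + k.+1%:Z * ((f (zsucc y) : int) - y%:Z)).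
  by move=> k; case: (H k).
elim=> [|k [IH1 IH2]].
  split.
    have -> : zmod y (y + 0)%N = y by apply: val_inj; rewrite /= addn0 modn_small.
    by rewrite hy; apply: cgR; rewrite mul0r addr0.
  have -> : zmod y (y + 1)%N = zsucc y by apply: val_inj; rewrite /= addn1.
  by apply: cgR; rewrite mul1r addrC subrK.
split=> //.
set u := zmod y (y + k)%N; set v := zmod y (y + k.+1)%N.
have -> : zmod y (y + k.+2)%N = dop u v.
  apply: ord_cg; apply: cg_trans (zmodE _ _) _.
  apply: cg_sym; apply: cg_trans (dopE' _ _) _.
  apply: cg_trans (cg_lin2 (zmodE _ _) (zmodE _ _)) _.
  apply: cgR; rewrite !PoszD. ring.
rewrite hm; apply: cg_trans (dopE' _ _) _.
apply: cg_trans (cg_lin2 IH1 IH2) _.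
apply: cgR. rewrite -[k.+2]addn2 -[k.+1]addn1 !PoszD. ring.
Qed.

Lemma cg_modz n (K : int) : (0 < n)%N -> exists K' : nat, cg n K'%:Z K.
Proof.
move=> hn; exists `|(K %% n%:Z)%Z|%N.
rewrite gez0_abs; last by rewrite modz_ge0 // eqz_nat -lt0n.
have := divz_eq K n%:Z => {2}->.
apply: cg_sym; apply: cg_trans (cgD (cg0 _ _) (cgR n (erefl (K %% n)%Z))) _.
by apply: cgR; rewrite add0r.
Qed.

Lemma endo_int n (y : 'I_n) f : pointed_endo y f -> forall (u : 'I_n) (K : int),
  cg n (u : nat) (y%:Z + K) ->
  cg n (f u : nat) (y%:Z + K * ((f (zsucc y) : int) - y%:Z)).
Proof.
move=> hf u K hu.
have [K' hK] := cg_modz K (ord_pos y).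
have -> : u = zmod y (y + K')%N.
  apply: ord_cg; apply: cg_trans hu _; apply: cg_sym; apply: cg_trans (zmodE _ _) _.
  by rewrite PoszD; apply: cgD (cgR _ _) hK.
apply: cg_trans (endo_nat hf K') _.
by apply: cgD (cgR _ _) (cgM _ hK).
Qed.

Lemma cg0E n a : cg n a 0 <-> (n%:Z %| a)%Z.
Proof. by rewrite /cg subr0. Qed.

Lemma nt_back (n p : nat) (d x : int) :
  (n%:Z %| p%:Z * d)%Z -> (gcdn p n %| x)%Z -> (n%:Z %| d * x)%Z.
Proof.
move=> hpd hx.
have [u [v huv]] := Bezoutz p n.
have hdc : (n%:Z %| d * (gcdn p n)%:Z)%Z.
  have -> : d * (gcdn p n)%:Z = u * (p%:Z * d) + (v * d) * n%:Z.
    rewrite -[(gcdn p n)%:Z]/(gcdz p n) -huv; ring.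
  by rewrite rpredD // dvdz_mull // dvdzz.
apply: dvdz_trans hdc _.
exact: dvdz_mul (dvdzz d) hx.
Qed.

Lemma nt_fwd (n p : nat) (d x : int) : prime (gcdn p n) ->
  (n%:Z %| p%:Z * d)%Z -> (n%:Z %| d * x)%Z -> ~~ (n%:Z %| d)%Z ->
  (gcdn p n %| x)%Z.
Proof.
move=> hc hpd hdx hnd; apply/negPn/negP => hcx.
set g := gcdz p x.
have [u [v huv]] := Bezoutz p x.
have hgd : (n%:Z %| g * d)%Z.
  have -> : g * d = u * (p%:Z * d) + v * (d * x) by rewrite /g -huv; ring.
  by rewrite rpredD // dvdz_mull.
have cop : coprimez n g.
  rewrite /coprimez /g /gcdz /=.
  set e := gcdn n _.
  have he1 : (e %| n)%N by apply: dvdn_gcdl.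
  have he2 : (e %| gcdn p `|x|)%N by apply: dvdn_gcdr.
  have hep : (e %| gcdn p n)%N.
    by rewrite dvdn_gcd he1 (dvdn_trans he2 (dvdn_gcdl _ _)).
  have hex : (e %| `|x|)%N := dvdn_trans he2 (dvdn_gcdr _ _).
  have : coprime (gcdn p n) `|x|.
    by rewrite prime_coprime //.
  rewrite /coprime => /eqP h1.
  have : (e %| 1)%N by rewrite -h1 dvdn_gcd hep hex.
  by rewrite dvdn1 => /eqP ->.
by move: hnd; rewrite -(Gauss_dvdzr _ cop) hgd.
Qed.

Section Alpha.
Variables (p n : nat) (y : 'I_n) (alpha : qterm p.+1 -> 'I_n).
Hypothesis Ha : @pointed_hom p n y alpha.

Let a (k : nat) : int := (alpha (qgen (inord k)) : nat)%:Z.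
Let d : int := a 1 - y%:Z.

Lemma alpha_lin k : (k <= p)%N -> cg n (a k) (y%:Z + k%:Z * d).
Proof.
case: Ha => heq hop hinv h0 hp.
suff H : forall k, (k.+1 <= p)%N -> cg n (a k) (y%:Z + k%:Z * d) /\
   cg n (a k.+1) (y%:Z + k.+1%:Z * d).
  case: k => [|k] hk.
    apply: cgR; rewrite /a mul0r addr0.
    have -> : (inord 0 : 'I_p.+1) = ord0 by apply: val_inj; rewrite /= inordK.
    by rewrite h0.
  by case: (H k hk).
clear k; elim=> [|k IH] hk.
  have e0 : (inord 0 : 'I_p.+1) = ord0 by apply: val_inj; rewrite /= inordK.
  split; first by apply: cgR; rewrite /a mul0r addr0 e0 h0.
  by apply: cgR; rewrite mul1r /d addrC subrK.
have [IH1 IH2] := IH (ltnW hk).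
split=> //.
have hkp : (k < p.-1)%N by rewrite -subn1; lia.
have hr := heq _ _ (qeq_rel hkp).
have hak : cg n (a k) (2 * a k.+1 - a k.+2).
  rewrite /a hr hop; exact: dopE'.
have := cg_lin2 (cg_sym hak) (cgR n (erefl (a k.+1))).
have -> : 2 * a k.+1 - (2 * a k.+1 - a k.+2) = a k.+2 by ring.
move/cg_trans; apply; apply: cg_trans (cg_lin2 IH1 IH2) _; apply: cgR.
rewrite -[k.+2]addn2 -[k.+1]addn1 !PoszD. ring.
Qed.

Lemma alpha_val t : exists m : int, cg n (alpha t : nat) (y%:Z + m * d).
Proof.
case: Ha => heq hop hinv h0 hp.
elim: t => [g|t [m1 h1] s [m2 h2]|t [m1 h1] s [m2 h2]].
- exists (g : nat)%:Z.
  have := alpha_lin (ltn_ord g : (g <= p)%N).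
  by rewrite /a inord_val.
- exists (2 * m2 - m1); rewrite hop.
  apply: cg_trans (dopE' _ _) _; apply: cg_trans (cg_lin2 h1 h2) _.
  apply: cgR; ring.
- exists (2 * m2 - m1); rewrite hinv.
  apply: cg_trans (dopE' _ _) _; apply: cg_trans (cg_lin2 h1 h2) _.
  apply: cgR; ring.
Qed.

Lemma alpha_pd : (n%:Z %| p%:Z * d)%Z.
Proof.
case: Ha => heq hop hinv h0 hp.
have := alpha_lin (leqnn p).
have -> : a p = y%:Z.
  rewrite /a; have -> : (inord p : 'I_p.+1) = ord_max by apply: val_inj; rewrite /= inordK.
  by rewrite hp.
rewrite /cg (_ : _ - _ = - (p%:Z * d)); last by ring.
by rewrite rpredN.
Qed.

End Alpha.

Lemma main_aux (p n : nat) (hp : (0 < p)%N) (hn : (0 < n)%N)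
  (hc : prime (gcdn p n)) (y : 'I_n) (i j : 'I_n)
  (phi_i phi_j : 'I_n -> 'I_n)
  (Hi : pointed_endo y phi_i) (Hi1 : phi_i (zsucc y) = i)
  (Hj : pointed_endo y phi_j) (Hj1 : phi_j (zsucc y) = j)
  (alpha : qterm p.+1 -> 'I_n) (Ha : @pointed_hom p n y alpha)
  (Hnt : exists t s, alpha t <> alpha s) :
  (forall t, phi_i (alpha t) = phi_j (alpha t)) <-> i = j %[mod gcdn p n].
Proof.
pose d : int := (alpha (qgen (inord 1)) : nat)%:Z - y%:Z.
have hpd : (n%:Z %| p%:Z * d)%Z := alpha_pd Ha.
have hval : forall t, exists m : int, cg n (alpha t : nat) (y%:Z + m * d) := alpha_val Ha.
have hphi : forall (f : 'I_n -> 'I_n) t m, pointed_endo y f ->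
    cg n (alpha t : nat) (y%:Z + m * d) ->
    cg n (f (alpha t) : nat) (y%:Z + (m * d) * ((f (zsucc y) : nat)%:Z - y%:Z)).
  by move=> f t m hf ht; apply: endo_int.
have hnd : ~~ (n%:Z %| d)%Z.
  apply/negP => hd; case: Hnt => t [s []].
  suff hy : forall t, alpha t = y by rewrite !hy.
  move=> u; have [m hm] := hval u; apply: ord_cg; apply: cg_trans hm _.
  have := cgD (cgR n (erefl y%:Z)) (cgM m (cgR n (erefl d))).
  move=> _; rewrite /cg (_ : _ - _ = m * d); last by ring.
  exact: dvdz_mull.
rewrite cg_nat /cg; split.
- move=> H.
  have h1 : cg n (alpha (qgen (inord 1)) : nat) (y%:Z + 1 * d) by apply: cgR; rewrite /d; ring.
  have hi := hphi _ _ _ Hi h1; have hj := hphi _ _ _ Hj h1.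
  rewrite H Hi1 in hi; rewrite Hj1 in hj.
  have hdx : (n%:Z %| d * ((i : nat)%:Z - (j : nat)%:Z))%Z.
    have := cg_trans (cg_sym hi) hj; rewrite /cg.
    set L := (_ - _ as X in (_ %| X)%Z).
    have -> : L = d * ((i : nat)%:Z - (j : nat)%:Z) by rewrite /L; ring.
    done.
  exact: nt_fwd hc hpd hdx hnd.
- move=> hcx t.
  have hdx := nt_back hpd hcx.
  have [m hm] := hval t.
  have hi := hphi _ _ _ Hi hm; have hj := hphi _ _ _ Hj hm.
  rewrite Hi1 in hi; rewrite Hj1 in hj.
  apply: ord_cg; apply: cg_trans hi _; apply: cg_sym; apply: cg_trans hj _.
  rewrite /cg; set L := (_ - _ as X in (_ %| X)%Z).
  have -> : L = - (m * (d * ((i : nat)%:Z - (j : nat)%:Z))) by rewrite /L; ring.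
  by rewrite rpredN dvdz_mull.
Qed.

Local Close Scope ring_scope.
Unset Implicit Arguments.

Theorem lemma6p14 (p n : nat) (hp : 0 < p) (hn : 0 < n)
  (hc : prime (gcdn p n)) (y : 'I_n) (i j : 'I_n)
  (phi_i phi_j : 'I_n -> 'I_n)
  (Hi : pointed_endo y phi_i) (Hi1 : phi_i (zsucc y) = i)
  (Hj : pointed_endo y phi_j) (Hj1 : phi_j (zsucc y) = j)
  (alpha : qterm p.+1 -> 'I_n) (Ha : @pointed_hom p n y alpha)
  (Hnt : exists t s, alpha t <> alpha s) :
  (forall t, phi_i (alpha t) = phi_j (alpha t)) <-> i = j %[mod gcdn p n].
Proof. exact: (main_aux hp hn hc Hi Hi1 Hj Hj1 Ha Hnt). Qed.
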